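(* If $\sigma$ and $\pi$ are permutations with the same number of descents, then $|\mu(\sigma,\pi)|$ is at most the number of occurrences of $\sigma$ in $\pi$.
   Context: A permutation of length $n$ is an arrangement of $1,\dots,n$. An occurrence of $\sigma$ in $\pi$ is a set of positions of $\pi$ whose letters, read left to right, are in the same relative order as $\sigma$. The permutation poset is ordered by $\sigma\le\pi$ iff there is an occurrence of $\sigma$ in $\pi$. A descent is an index $i$ with $\pi_i>\pi_{i+1}$. $\mu$ is the Möbius function of this poset: $\mu(a,a)=1$, $\mu(a,b)=-\sum_{a\le z<b}\mu(a,z)$ for $a<b$, $\mu(a,b)=0$ if $a\not\le b$. *)

(* Defs.v *)
From mathcomp Require Import all_boot all_order all_algebra.
Set Implicit Arguments. Unset Strict Implicit. Unset Printing Implicit Defensive.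
Import GRing.Theory Num.Theory.

Definition is_perm (s : seq nat) : bool := perm_eq s (iota 1 (size s)).

Definition same_order (a b : seq nat) : bool :=
  (size a == size b) &&
  [forall i : 'I_(size a), forall j : 'I_(size a),
     (nth 0 a i < nth 0 a j) == (nth 0 b i < nth 0 b j)].

(* The letters of pi at the positions in A, read left to right
   (enum of a set of ordinals lists them in increasing order). *)
Definition letters_at (pi : seq nat) (A : {set 'I_(size pi)}) : seq nat :=
  [seq nth 0 pi (nat_of_ord i) | i <- enum A].

Definition is_occurrence (sigma pi : seq nat) (A : {set 'I_(size pi)}) : bool :=
  same_order (letters_at A) sigma.

Definition occ (sigma pi : seq nat) : nat :=
  #|[set A : {set 'I_(size pi)} | is_occurrence sigma A]|.

Definition contained (sigma pi : seq nat) : bool :=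
  [exists A : {set 'I_(size pi)}, is_occurrence sigma A].

Definition des (s : seq nat) : nat :=
  count (fun i => nth 0 s i > nth 0 s i.+1) (iota 0 (size s).-1).

(* Moebius function, by the defining recursion
   mu(a,a)=1, mu(a,b) = - sum_{a <= z < b} mu(a,z), mu(a,b)=0 if not a <= b.
   z ranges over all permutations of length <= |b| (every z <= b has
   length <= |b|); the fuel k is |b|, which suffices since z < b forces
   |z| < |b|. *)
Fixpoint mu_rec (k : nat) (a b : seq nat) : int :=
  if a == b then 1%R
  else if ~~ contained a b then 0%R
  else match k with
       | 0 => 0%R
       | k'.+1 =>
         (- \sum_(m < (size b).+1)
             \sum_(z <- permutations (iota 1 m)
                    | contained a z && contained z b && (z != b))
                mu_rec k' a z)%R
       end.

Definition mu (a b : seq nat) : int := mu_rec (size b) a b.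

(* Main.v *)
Require Import Defs.
From mathcomp Require Import all_boot all_order all_algebra zify ring.
Set Implicit Arguments. Unset Strict Implicit. Unset Printing Implicit Defensive.


Definition so (s t : seq nat) := size s = size t /\
  forall i j, i < size s -> j < size s ->
    (nth 0 s i < nth 0 s j) = (nth 0 t i < nth 0 t j).

Lemma sameP s t : reflect (so s t) (same_order s t).
Proof.
rewrite /same_order; apply: (iffP andP) => [[/eqP Hs /forallP H] | [Hs H]]; split => //.
- move=> i j Hi Hj; have := H (Ordinal Hi) => /forallP /(_ (Ordinal Hj)) /eqP; done.
- by apply/eqP.
- by apply/forallP => i; apply/forallP => j; apply/eqP; apply: H.
Qed.

Lemma so_refl s : so s s.
Proof. by split. Qed.

Lemma so_sym s t : so s t -> so t s.
Proof. by move=> [Hs H]; split=> // i j; rewrite -Hs => Hi Hj; rewrite H. Qed.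

Lemma so_trans s t u : so s t -> so t u -> so s u.
Proof.
move=> [H1 H2] [H3 H4]; split; first by rewrite H1.
by move=> i j Hi Hj; rewrite H2 // H4 // -H1.
Qed.

Lemma so_le s t i j : so s t -> i < size s -> j < size s ->
  (nth 0 s i <= nth 0 s j) = (nth 0 t i <= nth 0 t j).
Proof. by move=> [_ H] Hi Hj; rewrite leqNgt [RHS]leqNgt H. Qed.

Lemma so_map s t I : so s t -> all (fun i => i < size s) I ->
  so (map (nth 0 s) I) (map (nth 0 t) I).
Proof.
move=> [Hs H] /allP HI; split; first by rewrite !size_map.
move=> i j; rewrite size_map => Hi Hj.
rewrite !(nth_map 0) //; apply: H; apply: HI; exact: mem_nth.
Qed.

Lemma count_pos (P : pred nat) s :
  count P s = count (fun j => P (nth 0 s j)) (iota 0 (size s)).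
Proof. by rewrite -{1}(mkseq_nth 0 s) /mkseq count_map. Qed.

Lemma count_le_iota v n : v <= n -> count (fun y => y <= v) (iota 1 n) = v.
Proof.
move=> Hv; have -> : n = v + (n - v) by lia.
rewrite iotaD count_cat.
have -> : count (fun y => y <= v) (iota 1 v) = v.
  rewrite -[RHS](size_iota 1 v); apply/eqP; rewrite -all_count; apply/allP => y.
  rewrite mem_iota; lia.
have -> : count (fun y => y <= v) (iota (1 + v) (n - v)) = 0.
  apply/eqP; rewrite -leqn0 leqNgt -has_count; apply/hasP => -[y].
  rewrite mem_iota; lia.
by rewrite addn0.
Qed.

Lemma perm_rank s i : is_perm s -> i < size s ->
  nth 0 s i = count (fun y => y <= nth 0 s i) s.
Proof.
move=> Hp Hi; have Hm : nth 0 s i \in iota 1 (size s).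
  by rewrite -(perm_mem Hp) mem_nth.
rewrite (permP Hp) count_le_iota //; move: Hm; rewrite mem_iota; lia.
Qed.

Lemma perm_so_eq s t : is_perm s -> is_perm t -> so s t -> s = t.
Proof.
move=> Hs Ht Hst; have [Hsz _] := Hst.
apply: (@eq_from_nth _ 0) => // i Hi.
rewrite (perm_rank Hs Hi) (perm_rank Ht) -?Hsz // !(count_pos _ s) !(count_pos _ t) -Hsz.
apply: eq_in_count => j; rewrite mem_iota add0n => Hj; exact: so_le.
Qed.

Definition std (s : seq nat) := map (fun y => count (fun t => t <= y) s) s.

Lemma cnt_lt s a b : a < b -> b \in s ->
  count (fun t => t <= a) s < count (fun t => t <= b) s.
Proof.
move=> Hab Hb.
have := count_predUI (fun t => t <= a) (fun t => a < t <= b) s.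
have -> : count (predU (fun t => t <= a) (fun t => a < t <= b)) s = count (fun t => t <= b) s.
  by apply: eq_count => t /=; lia.
have -> : count (predI (fun t => t <= a) (fun t => a < t <= b)) s = 0.
  apply/eqP; rewrite -leqn0 leqNgt -has_count; apply/hasP => -[y _] /=; lia.
have : 0 < count (fun t => a < t <= b) s by rewrite -has_count; apply/hasP; exists b => //=; lia.
lia.
Qed.

Lemma cnt_le s a b : a <= b -> count (fun t => t <= a) s <= count (fun t => t <= b) s.
Proof. by move=> Hab; apply: sub_count => t /=; lia. Qed.

Lemma so_std s : so s (std s).
Proof.
split; first by rewrite size_map.
move=> i j Hi Hj; rewrite !(nth_map 0) //.
case: (ltnP (nth 0 s i) (nth 0 s j)) => H.
- by rewrite cnt_lt // mem_nth.
- by apply/esym/negbTE; rewrite -leqNgt cnt_le.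
Qed.

Lemma size_std s : size (std s) = size s.
Proof. by rewrite size_map. Qed.

Lemma perm_std s : uniq s -> is_perm (std s).
Proof.
move=> Hu; rewrite /is_perm size_std.
have Hinj : {in s &, injective (fun y => count (fun t => t <= y) s)}.
  move=> a b Ha Hb /= E; case: (ltngtP a b) => // H.
  - by have := cnt_lt H Hb; rewrite E ltnn.
  - by have := cnt_lt H Ha; rewrite E ltnn.
have Hu' : uniq (std s) by rewrite map_inj_in_uniq.
have Hsub : {subset std s <= iota 1 (size s)}.
  move=> y /mapP [a Ha ->]; rewrite mem_iota add1n ltnS count_size andbT.
  by rewrite -has_count; apply/hasP; exists a.
have Hsz : size (iota 1 (size s)) <= size (std s) by rewrite size_iota size_std.
have [_ Heq] := uniq_min_size Hu' Hsub Hsz.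
by apply: uniq_perm => //; apply: iota_uniq.
Qed.


Definition idx n (A : {set 'I_n}) : seq nat := [seq val i | i <- enum A].

Lemma idx_filter n (A : {set 'I_n}) :
  idx A = [seq val i | i <- filter (mem A) (enum 'I_n)].
Proof. by rewrite /idx {1}/enum_mem -enumT. Qed.

Lemma idx_subseq n (A : {set 'I_n}) : subseq (idx A) (iota 0 n).
Proof. by rewrite idx_filter -val_enum_ord map_subseq // filter_subseq. Qed.

Lemma size_idx n (A : {set 'I_n}) : size (idx A) = #|A|.
Proof. by rewrite size_map cardE. Qed.

Definition setJ n (J : seq nat) : {set 'I_n} := [set i : 'I_n | val i \in J].

Lemma idx_setJ n J : subseq J (iota 0 n) -> idx (setJ n J) = J.
Proof.
move=> HJ; rewrite idx_filter.
rewrite (@eq_filter _ _ (preim val (mem J))); last by move=> i; rewrite /= inE.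
by rewrite -filter_map val_enum_ord -(subseq_uniqP (iota_uniq 0 n) HJ).
Qed.

Lemma setJ_idx n (A : {set 'I_n}) : setJ n (idx A) = A.
Proof.
apply/setP => i; rewrite inE /idx (mem_map val_inj) mem_enum //.
Qed.

Lemma letters_idx (pi : seq nat) (A : {set 'I_(size pi)}) :
  letters_at A = map (nth 0 pi) (idx A).
Proof. by rewrite /letters_at /idx -map_comp. Qed.

Lemma subseq_iota_all J n : subseq J (iota 0 n) -> all (fun i => i < n) J.
Proof.
move=> /mem_subseq H; apply/allP => i /H; rewrite mem_iota; lia.
Qed.

Lemma occP (z pi : seq nat) (A : {set 'I_(size pi)}) :
  reflect (so (map (nth 0 pi) (idx A)) z) (is_occurrence z A).
Proof. by rewrite /is_occurrence letters_idx; apply: sameP. Qed.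

Definition occJ (a b : seq nat) (J : seq nat) :=
  subseq J (iota 0 (size b)) /\ so (map (nth 0 b) J) a.

Lemma containedP a b : reflect (exists J, occJ a b J) (contained a b).
Proof.
apply: (iffP existsP) => [[A /occP H] | [J [H1 H2]]].
- by exists (idx A); split => //; apply: idx_subseq.
- by exists (setJ _ J); apply/occP; rewrite idx_setJ.
Qed.

Lemma occJ_size a b J : occJ a b J -> size a = size J /\ size J <= size b.
Proof.
move=> [H1 [H2 _]]; split; first by rewrite -H2 size_map.
by have := size_subseq H1; rewrite size_iota.
Qed.

Lemma contained_size a b : contained a b -> size a <= size b.
Proof. by move=> /containedP [J /occJ_size [-> ->]]. Qed.

Lemma contained_refl a : contained a a.
Proof.
apply/containedP; exists (iota 0 (size a)); split => //.
have -> : map (nth 0 a) (iota 0 (size a)) = a by rewrite -{3}(mkseq_nth 0 a).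
exact: so_refl.
Qed.

Lemma map_nth_subseq (s : seq nat) I : subseq I (iota 0 (size s)) ->
  subseq (map (nth 0 s) I) s.
Proof.
by move=> H; rewrite -{2}(mkseq_nth 0 s) /mkseq map_subseq.
Qed.

Lemma occJ_trans a z b I1 I2 : occJ a z I1 -> occJ z b I2 ->
  occJ a b (map (nth 0 I2) I1).
Proof.
move=> [H1 H2] [H3 H4].
have Hsz : size z = size I2 by have [<- _] := H4; rewrite size_map.
split.
- apply: subseq_trans H3; apply: map_nth_subseq; by rewrite -Hsz.
- apply: (so_trans _ H2).
  have -> : map (nth 0 b) (map (nth 0 I2) I1) = map (nth 0 (map (nth 0 b) I2)) I1.
    rewrite -map_comp; apply/eq_in_map => i Hi /=; rewrite (nth_map 0) //.
    by move: (subseq_iota_all H1) => /allP /(_ i Hi); rewrite Hsz.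
  apply: so_map; first exact: H4.
  by have := subseq_iota_all H1; rewrite size_map Hsz.
Qed.

Lemma contained_trans a z b : contained a z -> contained z b -> contained a b.
Proof.
move=> /containedP [I1 H1] /containedP [I2 H2]; apply/containedP.
by exists (map (nth 0 I2) I1); apply: occJ_trans H1 H2.
Qed.

Lemma subseq_iota_eq J n : subseq J (iota 0 n) -> size J = n -> J = iota 0 n.
Proof.
move=> H Hs; have := size_subseq_leqif H; rewrite size_iota Hs => -[_].
by rewrite eqxx => /esym /eqP.
Qed.

Lemma contained_eq a b : is_perm a -> is_perm b -> contained a b ->
  size a = size b -> a = b.
Proof.
move=> Ha Hb /containedP [J HJ] Hs.
have [Hs1 _] := occJ_size HJ.
have HJi : J = iota 0 (size b) by apply: subseq_iota_eq (proj1 HJ) _; rewrite -Hs1.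
have [_ H] := HJ; rewrite HJi in H.
have E : map (nth 0 b) (iota 0 (size b)) = b by rewrite -{3}(mkseq_nth 0 b).
rewrite E in H; symmetry; exact: perm_so_eq.
Qed.

Lemma contained_antisym a b : is_perm a -> is_perm b -> contained a b ->
  contained b a -> a = b.
Proof.
move=> Ha Hb H1 H2; apply: contained_eq => //.
by apply/eqP; rewrite eqn_leq !contained_size.
Qed.


Definition dsc (s : seq nat) j := nth 0 s j.+1 < nth 0 s j.
Definition lab (s : seq nat) i := count (dsc s) (iota 0 i).

Lemma des_lab s : des s = lab s (size s).-1.
Proof. by []. Qed.

Lemma lab0 s : lab s 0 = 0.
Proof. by []. Qed.

Lemma labS s j : lab s j.+1 = lab s j + dsc s j.
Proof. by rewrite /lab -addn1 iotaD count_cat /= addn0. Qed.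

Lemma lab_mono s i i' : i <= i' -> lab s i <= lab s i'.
Proof.
move=> H; elim: i' H => [|k IH]; first by rewrite leqn0 => /eqP ->.
rewrite leq_eqVlt => /orP [/eqP -> //| H]; rewrite labS.
by have := IH H; lia.
Qed.

Lemma lab_eq_le s i i' : i <= i' -> lab s i = lab s i' -> nth 0 s i <= nth 0 s i'.
Proof.
elim: i' => [|k IH]; first by rewrite leqn0 => /eqP ->.
rewrite leq_eqVlt ltnS => /orP [/eqP -> //| H]; rewrite labS => E.
have H1 := lab_mono s H.
have Hd : dsc s k = false by move: E H1; case: (dsc s k) => /=; lia.
have H2 : lab s i = lab s k by move: E H1; rewrite Hd; lia.
have := IH H H2; move: Hd; rewrite /dsc; lia.
Qed.

Lemma lab_desc s i i' : i <= i' -> lab s i + (nth 0 s i' < nth 0 s i) <= lab s i'.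
Proof.
move=> H; have H1 := lab_mono s H.
case E: (nth 0 s i' < nth 0 s i); last by rewrite addn0.
case: (ltngtP (lab s i) (lab s i')) H1 => //; first by lia.
move=> Heq; first [have := lab_eq_le H Heq | have := lab_eq_le H (esym Heq)]; lia.
Qed.

Lemma lab_le_des s i : i < size s -> lab s i <= des s.
Proof. by move=> H; rewrite des_lab; apply: lab_mono; lia. Qed.

Lemma subseq_iota_sorted J n : subseq J (iota 0 n) -> sorted ltn J.
Proof. by move=> H; apply: (subseq_sorted ltn_trans H); apply: iota_ltn_sorted. Qed.

Lemma occJ_nth_lt a b J t t' : occJ a b J -> t < t' -> t' < size J ->
  nth 0 J t < nth 0 J t'.
Proof.
move=> [H _] Ht Ht'.
by apply: (sorted_ltn_nth ltn_trans 0 (subseq_iota_sorted H)) => //; rewrite inE; lia.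
Qed.

Lemma occJ_lt a b J t : occJ a b J -> t < size J -> nth 0 J t < size b.
Proof.
by move=> [H _] Ht; move: (subseq_iota_all H) => /allP; apply; apply: mem_nth.
Qed.

Lemma claimA a b J t t' : occJ a b J -> t <= t' -> t' < size J ->
  lab a t' + lab b (nth 0 J t) <= lab a t + lab b (nth 0 J t').
Proof.
move=> HJ; elim: t' => [|k IH]; first by rewrite leqn0 => /eqP ->.
rewrite leq_eqVlt ltnS => /orP [/eqP -> //| Ht] Hk.
have := IH Ht (ltnW Hk); rewrite labS.
have Hsz := occJ_size HJ.
have -> : dsc a k = (nth 0 b (nth 0 J k.+1) < nth 0 b (nth 0 J k)).
  have [_ [_ Hso]] := HJ; rewrite /dsc -Hso ?size_map; try lia.
  by rewrite !(nth_map 0) //; lia.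
have := lab_desc b (ltnW (occJ_nth_lt HJ (ltnSn k) Hk)); lia.
Qed.

Lemma des_mono a b : contained a b -> des a <= des b.
Proof.
move=> /containedP [J HJ]; have [Hs1 Hs2] := occJ_size HJ.
case Hk: (size J) => [|k].
  by rewrite des_lab Hs1 Hk /lab.
have Hk' : k < size J by rewrite Hk.
have := claimA HJ (leq0n k) Hk'.
rewrite des_lab Hs1 Hk /= lab0.
have := lab_le_des (occJ_lt HJ Hk'); lia.
Qed.

Lemma run_pres a b J t : occJ a b J -> des a = des b -> t < size J ->
  lab a t = lab b (nth 0 J t).
Proof.
move=> HJ Hd Ht; have [Hs1 Hs2] := occJ_size HJ.
have Hk : (size J).-1 < size J by lia.
have H1 := claimA HJ (leq0n t) Ht.
have Ht' : t <= (size J).-1 by lia.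
have H2 := claimA HJ Ht' Hk.
have H3 := lab_le_des (occJ_lt HJ Hk).
have : lab a (size J).-1 = des a by rewrite des_lab Hs1.
rewrite lab0 in H1; lia.
Qed.


Lemma perm_uniq_ s : is_perm s -> uniq s.
Proof. by move=> H; rewrite (perm_uniq H) iota_uniq. Qed.

Lemma perm_mem_ s v : is_perm s -> (v \in s) = (0 < v <= size s).
Proof. move=> H; rewrite (perm_mem H) mem_iota; lia. Qed.

Lemma perm_nth_mem s i : is_perm s -> i < size s -> 0 < nth 0 s i <= size s.
Proof. by move=> H Hi; rewrite -perm_mem_ // mem_nth. Qed.

Lemma count_lt_perm x v : is_perm x -> v \in x -> count (fun y => y < v) x = v.-1.
Proof.
move=> H Hv; have := Hv; rewrite perm_mem_ // => Hv'.
rewrite (permP H) -(count_le_iota (_ : v.-1 <= size x)); last by lia.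
by apply: eq_count => y /=; lia.
Qed.

Lemma nth_rank U v : sorted ltn U -> v \in U -> nth 0 U (count (fun y => y < v) U) = v.
Proof.
elim: U => [|u U IH] //= Hs; rewrite inE => /orP [/eqP -> | Hv].
- have := order_path_min ltn_trans Hs => /allP Hall.
  rewrite ltnn /=; have -> : count (fun y => y < u) U = 0.
    apply/eqP; rewrite -leqn0 leqNgt -has_count; apply/hasP => -[y /Hall]; lia.
  by [].
- have Hu : u < v by have := order_path_min ltn_trans Hs => /allP /(_ v Hv).
  by rewrite Hu /= IH // (path_sorted Hs).
Qed.

Definition W (s : seq nat) := [seq lab s (index v s) | v <- iota 1 (size s)].
Definition g (pi : seq nat) v := lab pi (index v pi).

Lemma size_W s : size (W s) = size s.
Proof. by rewrite size_map size_iota. Qed.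

Lemma subseq_filter_imp (p q : pred nat) s : (forall x, p x -> q x) ->
  subseq (filter p s) (filter q s).
Proof.
move=> H; have -> : filter p s = filter p (filter q s).
  by rewrite -filter_predI; apply: eq_filter => x /=; case E: (p x) => //; rewrite H.
exact: filter_subseq.
Qed.

Lemma fwd (pi x J : seq nat) (p : pred nat) : is_perm pi -> is_perm x ->
  des x = des pi -> occJ x pi J -> (forall i, i \in J -> p (nth 0 pi i)) ->
  subseq (W x) (map (g pi) (filter p (iota 1 (size pi)))).
Proof.
move=> Hpi Hx Hd HJ Hp.
set V := map (nth 0 pi) J.
set U := filter (mem V) (iota 1 (size pi)).
have [Hs1 Hs2] := occJ_size HJ.
have HVsub : subseq V pi by apply: map_nth_subseq; exact: (proj1 HJ).
have HVu : uniq V by apply: subseq_uniq HVsub (perm_uniq_ Hpi).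
have HUV : perm_eq U V.
  apply: uniq_perm => //; first by rewrite filter_uniq // iota_uniq.
  move=> v; rewrite mem_filter andb_idr // => Hv.
  have : v \in pi by apply: (mem_subseq HVsub).
  by rewrite perm_mem_ // mem_iota; lia.
have HUs : sorted ltn U by apply: sorted_filter; [exact: ltn_trans| exact: iota_ltn_sorted].
have -> : W x = map (g pi) U.
  apply: (@eq_from_nth _ 0).
    by rewrite size_W size_map (perm_size HUV) size_map Hs1.
  move=> r; rewrite size_W => Hr.
  rewrite /W (nth_map 0) ?size_iota // nth_iota // add1n.
  have Hmx : r.+1 \in x by rewrite perm_mem_ //; lia.
  set t := index r.+1 x.
  have Ht : t < size x by rewrite index_mem.
  have Hxt : nth 0 x t = r.+1 by rewrite nth_index.
  have Hso := proj2 HJ.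
  have HVt : nth 0 V t \in V by apply: mem_nth; rewrite size_map -Hs1.
  have Hcnt : count (fun y => y < nth 0 V t) U = r.
    rewrite (permP HUV).
    rewrite (count_pos _ V).
    have Hsz : size V = size x by case: Hso.
    have -> : count (fun j => nth 0 V j < nth 0 V t) (iota 0 (size V)) =
              count (fun j => nth 0 x j < nth 0 x t) (iota 0 (size x)).
      rewrite Hsz; apply: eq_in_count => j; rewrite mem_iota add0n => Hj.
      by case: Hso => _ H; apply: H; rewrite Hsz.
    transitivity (count (fun y => y < nth 0 x t) x); first by rewrite (count_pos _ x).
    by rewrite count_lt_perm ?Hxt // mem_nth.
  have HrU : r < size U by rewrite (perm_size HUV) size_map -Hs1.
  rewrite (nth_map 0) //.
  have -> : nth 0 U r = nth 0 V t.
    by rewrite -{1}Hcnt nth_rank // (perm_mem HUV).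
  rewrite /g /V (nth_map 0) -?Hs1 // index_uniq ?(perm_uniq_ Hpi) //.
    by rewrite (run_pres HJ Hd) // -Hs1.
  by apply: occJ_lt HJ _; rewrite -Hs1.
apply: map_subseq; apply: subseq_filter_imp => v /=.
move=> /mapP [i Hi ->]; exact: Hp.
Qed.

Definition R (pi : seq nat) : rel nat := fun u u' =>
  (g pi u < g pi u') || ((g pi u == g pi u') && (u < u')).

Lemma R_trans pi : transitive (R pi).
Proof. move=> b a c; rewrite /R /=; lia. Qed.

Lemma R_irr pi : irreflexive (R pi).
Proof. move=> a; rewrite /R /=; lia. Qed.

Lemma nth_neq s i j : uniq s -> i < size s -> j < size s -> i != j -> nth 0 s i != nth 0 s j.
Proof. by move=> Hu Hi Hj; rewrite nth_uniq. Qed.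

Lemma pi_sorted pi : is_perm pi -> sorted (R pi) pi.
Proof.
move=> Hp; have Hu := perm_uniq_ Hp.
apply/(sortedP 0) => i Hi.
rewrite /R /g !index_uniq //; last exact: ltnW.
rewrite labS; case E: (dsc pi i); first by rewrite addn1 ltnSn.
rewrite addn0 ltnn eqxx /=.
have := nth_neq Hu (ltnW Hi) Hi (_ : i != i.+1); move: E; rewrite /dsc; lia.
Qed.

Lemma sorted_lt_iff U a b : sorted ltn U -> a < size U -> b < size U ->
  (nth 0 U a < nth 0 U b) = (a < b).
Proof.
move=> Hs Ha Hb.
have H := sorted_ltn_nth ltn_trans 0 Hs.
case: (ltngtP a b) => Hab.
- by apply: H => //; rewrite inE.
- by have := H b a (Hb : b \in [pred n | n < size U]) Ha Hab; lia.
- by rewrite Hab ltnn.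
Qed.

Lemma bwd (pi x : seq nat) (p : pred nat) : is_perm pi -> is_perm x ->
  subseq (W x) (map (g pi) (filter p (iota 1 (size pi)))) ->
  exists J, occJ x pi J /\ (forall i, i \in J -> p (nth 0 pi i)).
Proof.
move=> Hpi Hx /subseqP [m Hm E].
rewrite -map_mask in E.
set U := mask m (filter p (iota 1 (size pi))) in E.
have HUsub : subseq U (filter p (iota 1 (size pi))) by apply: mask_subseq.
have HUsub' : subseq U (iota 1 (size pi)) by apply: subseq_trans HUsub (filter_subseq _ _).
have HUs : sorted ltn U by apply: (subseq_sorted ltn_trans HUsub'); apply: iota_ltn_sorted.
have HUsz : size U = size x by rewrite -(size_W x) E size_map.
have HxU : forall w, w \in x -> w.-1 < size U.
  by move=> w; rewrite perm_mem_ // HUsz; lia.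
set J := filter (fun i => nth 0 pi i \in U) (iota 0 (size pi)).
exists J; split; last first.
  move=> i; rewrite mem_filter => /andP [H _].
  by have := mem_subseq HUsub H; rewrite mem_filter => /andP [].
split; first exact: filter_subseq.
have HV : map (nth 0 pi) J = filter (mem U) pi.
  have Epi : mkseq (nth 0 pi) (size pi) = pi := mkseq_nth 0 pi.
  by rewrite -[in RHS]Epi /mkseq filter_map /J.
set Y := map (fun v => nth 0 U v.-1) x.
have Hg : forall t, t < size x -> g pi (nth 0 U (nth 0 x t).-1) = lab x t.
  move=> t Ht; have Hxt : nth 0 x t \in x by apply: mem_nth.
  rewrite -(nth_map 0 0 (g pi)); last exact: HxU.
  rewrite -E /W (nth_map 0); last by rewrite size_iota -HUsz; apply: HxU.
  rewrite nth_iota; last by rewrite -HUsz; apply: HxU.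
  have := perm_nth_mem Hx Ht => Hb.
  have Hb' : 0 < nth 0 x t by case/andP: Hb.
  by rewrite add1n prednK // index_uniq ?(perm_uniq_ Hx).
have HYs : sorted (R pi) Y.
  apply/(sortedP 0) => t; rewrite size_map => Ht.
  have Ht' : t < size x := ltnW Ht.
  rewrite !(nth_map 0) //.
  rewrite /R !Hg //.
  rewrite labS; case E1: (dsc x t); first by rewrite addn1 ltnSn.
  rewrite addn0 ltnn eqxx /=.
  have Hne := nth_neq (perm_uniq_ Hx) (ltnW Ht) Ht (_ : t != t.+1).
  have H1 := perm_nth_mem Hx (ltnW Ht); have H2 := perm_nth_mem Hx Ht.
  rewrite sorted_lt_iff ?HxU ?mem_nth //.
  move: E1 Hne; rewrite /dsc; lia.
have HVs : sorted (R pi) (filter (mem U) pi).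
  by apply: sorted_filter; [exact: R_trans | exact: pi_sorted].
have HVY : filter (mem U) pi =i Y.
  move=> v; rewrite mem_filter; apply/idP/idP.
  - move=> /andP [Hv _]; apply/mapP; exists (index v U).+1; last by rewrite /= nth_index.
    by rewrite perm_mem_ // -HUsz /= index_mem.
  - move=> /mapP [w Hw ->]; rewrite /= mem_nth ?HxU //=.
    rewrite perm_mem_ // -[X in _ <= X](size_iota 1).
    have Hm' : nth 0 U w.-1 \in iota 1 (size pi) by apply: (mem_subseq HUsub'); rewrite mem_nth ?HxU.
    by move: Hm'; rewrite mem_iota size_iota; lia.
have -> : map (nth 0 pi) J = Y by rewrite HV; exact: (irr_sorted_eq (@R_trans pi) (@R_irr pi) HVs HYs HVY).
split; first by rewrite size_map.
move=> i j; rewrite size_map => Hi Hj; rewrite !(nth_map 0) //.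
have H1 := perm_nth_mem Hx Hi; have H2 := perm_nth_mem Hx Hj.
rewrite sorted_lt_iff //; try (apply: HxU; apply: mem_nth => //); lia.
Qed.

Import GRing.Theory.
Section PartE.
Local Open Scope ring_scope.

Fixpoint allmasks n : seq (seq bool) :=
  if n is n'.+1 then map (cons true) (allmasks n') ++ map (cons false) (allmasks n')
  else [:: [::]].

Definition cond (a : nat) (w : seq nat) (m : seq bool) : bool :=
  match w with d :: _ => (eqn d a) ==> head false m | [::] => true end.

Fixpoint normalw (w : seq nat) (m : seq bool) : bool :=
  match w, m with
  | c :: w', b :: m' => normalw w' m' && cond c w' m'
  | _, _ => true
  end.

Definition ind (b : bool) : int := if b then 1 else 0.
Definition sg (m : seq bool) : int := (-1) ^+ (count negb m).

Definition Zs a (w v : seq nat) : int :=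
  \sum_(m <- allmasks (size w) | normalw w m && cond a w m) sg m * ind (subseq v (mask m w)).
Definition Ss (w v : seq nat) : int :=
  \sum_(m <- allmasks (size w) | normalw w m) sg m * ind (subseq v (mask m w)).

Lemma big_allmasks n (P : pred (seq bool)) (F : seq bool -> int) :
  \sum_(m <- allmasks n.+1 | P m) F m =
  \sum_(m <- allmasks n | P (true :: m)) F (true :: m) +
  \sum_(m <- allmasks n | P (false :: m)) F (false :: m).
Proof. by rewrite /= big_cat !big_map. Qed.

Definition tl (c : nat) (v : seq nat) :=
  if v is d :: v' then (if d == c then v' else v) else v.

Lemma subseq_cons_tl c v M : subseq v (c :: M) = subseq (tl c v) M.
Proof. by case: v => [|d v] //=; rewrite sub0seq. Qed.

Lemma Zs_cons a c w v :
  Zs a (c :: w) v = Zs c w (tl c v) - (if eqn c a then 0 else Zs c w v).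
Proof.
rewrite /Zs [size _]/= big_allmasks; congr (_ + _).
  apply: eq_big => [m|m _]; first by rewrite /= implybT andbT.
  by rewrite [mask _ _]/= subseq_cons_tl.
case E: (eqn c a).
  by rewrite big1 ?oppr0 // => m; rewrite /= E andbF.
rewrite -sumrN; apply: eq_big => [m|m _]; first by rewrite /= E andbT.
by rewrite /sg /= exprS mulN1r mulNr.
Qed.

Lemma Ss_cons c w v : Ss (c :: w) v = Zs c w (tl c v) - Zs c w v.
Proof.
rewrite /Ss /Zs [size _]/= big_allmasks; congr (_ + _).
  apply: eq_big => [m|m _]; first by [].
  by rewrite [mask _ _]/= subseq_cons_tl.
rewrite -sumrN; apply: eq_big => [m|m _]; first by [].
by rewrite /sg /= exprS mulN1r mulNr.
Qed.

Lemma Zs_nil a v : Zs a [::] v = ind (v == [::]).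
Proof. by rewrite /Zs /= big_cons big_nil /= /sg /= mul1r addr0. Qed.

Lemma Ss_nil v : Ss [::] v = ind (v == [::]).
Proof. by rewrite /Ss /= big_cons big_nil /= /sg /= mul1r addr0. Qed.

Lemma Q_lemma c w :
  (forall v, Zs c w v - Zs c w (c :: v) = ind (v == w)) ->
  forall v, Zs c w (tl c v) - Zs c w v = ind (v == c :: w).
Proof.
move=> IH [|d v] /=; first by rewrite subrr.
case: eqP => [-> | Hne]; first by rewrite IH eqseq_cons eqxx.
by rewrite subrr eqseq_cons; case: eqP.
Qed.

Lemma K_lemma w : forall a v, Zs a w v - Zs a w (a :: v) = ind (v == w).
Proof.
elim: w => [|c w IH] a v; first by rewrite !Zs_nil subr0.
rewrite !Zs_cons; case E: (eqn c a).
- have Hca : c = a by apply/eqnP.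
  subst c; rewrite !subr0 [tl a (a :: v)]/= eqxx.
  exact: Q_lemma.
- rewrite !Q_lemma //.
  have -> : (a :: v == c :: w) = false.
    rewrite eqseq_cons; apply/negbTE; apply/nandP; left.
    by apply/eqP => H; move: E; rewrite H eqnE eqxx.
  by rewrite subr0.
Qed.

Lemma Ss_main w v : Ss w v = ind (v == w).
Proof.
case: w => [|c w]; first exact: Ss_nil.
rewrite Ss_cons; apply: Q_lemma; exact: K_lemma.
Qed.

End PartE.

Lemma mem_cons_map (c : bool) (L : seq (seq bool)) b m :
  (b :: m \in map (cons c) L) = (b == c) && (m \in L).
Proof.
apply/mapP/andP => [[m' Hm' [-> ->]] | [/eqP -> H]]; first by split.
by exists m.
Qed.

Lemma nil_notin_map (c : bool) (L : seq (seq bool)) : ([::] \in map (cons c) L) = false.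
Proof. by apply/mapP => -[? _]. Qed.

Lemma mem_allmasks n m : (m \in allmasks n) = (size m == n).
Proof.
elim: n m => [|n IH] m; first by case: m.
case: m => [|b m]; first by rewrite /= mem_cat !nil_notin_map.
by rewrite /= mem_cat !mem_cons_map IH eqSS; case: b => /=; rewrite ?orbF.
Qed.

Lemma allmasks_uniq n : uniq (allmasks n).
Proof.
elim: n => [|n IH] //=; rewrite cat_uniq !map_inj_uniq //; try (by move=> ? ? [->]).
rewrite IH andbT; apply/hasP => -[m /mapP [m1 _ ->]]; by rewrite /= mem_cons_map.
Qed.

Definition vm (pi : seq nat) (A : {set 'I_(size pi)}) : seq bool :=
  [seq (index v pi \in idx A) | v <- iota 1 (size pi)].

Lemma mem_idx n (A : {set 'I_n}) (i : 'I_n) : (val i \in idx A) = (i \in A).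
Proof. by rewrite /idx (mem_map val_inj) mem_enum. Qed.

Lemma nth_vm pi (A : {set 'I_(size pi)}) r : r < size pi ->
  nth false (vm A) r = (index r.+1 pi \in idx A).
Proof. by move=> Hr; rewrite /vm (nth_map 0) ?size_iota // nth_iota // add1n. Qed.

Lemma vm_inj pi : is_perm pi -> injective (@vm pi).
Proof.
move=> Hp A B E; apply/setP => i.
have Hi := ltn_ord i.
have Hm := perm_nth_mem Hp Hi.
have Hr : (nth 0 pi i).-1 < size pi by lia.
have := nth_vm A Hr; rewrite E nth_vm // prednK; last by lia.
by rewrite index_uniq ?(perm_uniq_ Hp) // -!mem_idx => ->.
Qed.

Lemma vm_surj pi m : is_perm pi -> size m = size pi ->
  vm [set i : 'I_(size pi) | nth false m (nth 0 pi i).-1] = m.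
Proof.
move=> Hp Hs; apply: (@eq_from_nth _ false); first by rewrite size_map size_iota.
move=> r; rewrite size_map size_iota => Hr; rewrite nth_vm //.
have Hin : r.+1 \in pi by rewrite perm_mem_ //; lia.
have Hi : index r.+1 pi < size pi by rewrite index_mem.
have -> : index r.+1 pi = val (Ordinal Hi) by [].
by rewrite mem_idx inE /= nth_index.
Qed.

Lemma reindex pi (F : seq bool -> int) : is_perm pi ->
  (\sum_(A : {set 'I_(size pi)}) F (vm A) = \sum_(m <- allmasks (size pi)) F m)%R.
Proof.
move=> Hp.
rewrite -(big_image _ _ (@vm pi) predT F).
apply: perm_big; apply: uniq_perm.
- rewrite map_inj_uniq ?enum_uniq //; exact: vm_inj.
- exact: allmasks_uniq.
move=> m; rewrite mem_allmasks; apply/idP/idP.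
- by move=> /mapP [A _ ->]; rewrite size_map size_iota.
- move=> /eqP Hs; apply/mapP; exists [set i : 'I_(size pi) | nth false m (nth 0 pi i).-1].
    by rewrite mem_enum.
  by rewrite vm_surj.
Qed.

Lemma count_vm pi (A : {set 'I_(size pi)}) : is_perm pi ->
  count negb (vm A) = size pi - size (idx A).
Proof.
move=> Hp.
have Hc : count id (vm A) = size (idx A).
  rewrite /vm count_map -(permP Hp).
  rewrite (count_pos _ pi).
  rewrite (@eq_in_count _ _ (mem (idx A))); last first.
    move=> i; rewrite mem_iota add0n => Hi /=.
    by rewrite index_uniq ?(perm_uniq_ Hp).
  rewrite -size_filter.
  by rewrite -(subseq_uniqP (iota_uniq 0 _) (idx_subseq A)).
have := count_predC id (vm A); rewrite size_map size_iota Hc.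
have : size (idx A) <= size pi.
  by have := size_subseq (idx_subseq A); rewrite size_iota.
have -> : count (predC id) (vm A) = count negb (vm A) by apply: eq_count.
lia.
Qed.


Definition Pl n := flatten [seq permutations (iota 1 m) | m <- iota 0 n.+1].

Lemma mem_perms z m : (z \in permutations (iota 1 m)) = is_perm z && (size z == m).
Proof.
rewrite mem_permutations /is_perm; apply/idP/andP => [H|[H /eqP <-] //].
by have := perm_size H; rewrite size_iota => Hs; rewrite Hs; split.
Qed.

Lemma mem_Pl n z : (z \in Pl n) = is_perm z && (size z <= n).
Proof.
apply/flattenP/andP => [[s /mapP [m Hm ->]] | [H1 H2]].
- rewrite mem_perms => /andP [-> /eqP Hs]; split => //.
  by move: Hm; rewrite mem_iota Hs; lia.
- exists (permutations (iota 1 (size z))); last by rewrite mem_perms H1 eqxx.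
  by apply/mapP; exists (size z) => //; rewrite mem_iota; lia.
Qed.

Lemma PlS n : Pl n.+1 = Pl n ++ permutations (iota 1 n.+1).
Proof. by rewrite /Pl -[n.+2]addn1 iotaD map_cat flatten_cat /= cats0. Qed.

Lemma Pl_uniq n : uniq (Pl n).
Proof.
elim: n => [|n IH]; first by [].
rewrite PlS cat_uniq IH permutations_uniq andbT.
apply/hasP => -[z]; rewrite mem_perms mem_Pl => /andP [_ /eqP ->] /andP [_]; lia.
Qed.

Lemma Pl_restrict (R : Type) (idx : R) (op : Monoid.com_law idx) m n
    (P : pred (seq nat)) (F : seq nat -> R) :
  m <= n -> (forall z, P z -> size z <= m) ->
  \big[op/idx]_(z <- Pl n | P z) F z = \big[op/idx]_(z <- Pl m | P z) F z.
Proof.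
move=> Hmn HP; elim: n Hmn => [|n IH]; first by rewrite leqn0 => /eqP ->.
rewrite leq_eqVlt => /orP [/eqP -> // | Hlt].
have H0 : \big[op/idx]_(z <- permutations (iota 1 n.+1) | P z) F z = idx.
  apply: big1_seq => z /andP [Hz]; rewrite mem_perms => /andP [_ /eqP Hs].
  have := HP z Hz; rewrite Hs; lia.
by rewrite PlS big_cat IH // H0 Monoid.mulm1.
Qed.

Lemma mu_rec_eq k a b : mu_rec k.+1 a b =
  if a == b then 1%R else if ~~ contained a b then 0%R else
  (- \sum_(z <- Pl (size b) | contained a z && contained z b && (z != b)) mu_rec k a z)%R.
Proof.
rewrite /= /Pl big_flatten big_map.
by rewrite -[in RHS](subn0 (size b).+1) -/(index_iota 0 _) big_mkord.
Qed.

Lemma contained_lt z b : is_perm z -> is_perm b -> contained z b -> z != b ->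
  size z < size b.
Proof.
move=> Hz Hb Hc Hne; rewrite ltn_neqAle contained_size // andbT.
by apply/eqP => Hs; move/eqP: Hne; apply; apply: contained_eq.
Qed.

Lemma contained_nil a : a != [::] -> contained a [::] = false.
Proof.
move=> Hne; apply/negbTE/negP => Hc; move/negP: Hne; apply.
by apply/eqP/size0nil; have := contained_size Hc; rewrite leqn0 => /eqP.
Qed.

Lemma mu_rec0 a b : mu_rec 0 a b =
  if a == b then 1%R else if ~~ contained a b then 0%R else 0%R.
Proof. by []. Qed.

Lemma mu_rec_nil k a : mu_rec k a [::] = if a == [::] then 1%R else 0%R.
Proof.
case: k => [|k]; rewrite ?mu_rec0 ?mu_rec_eq; case: eqP => // Hne;
  by rewrite contained_nil //; apply/eqP.
Qed.

Lemma mu_fuel k : forall k' a b, is_perm b -> size b <= k -> size b <= k' ->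
  mu_rec k a b = mu_rec k' a b.
Proof.
elim: k => [|k IH] k' a b Hb Hk Hk'.
- have Hb0 : b = [::] by move: Hk; rewrite leqn0 => /eqP /size0nil.
  by subst b; rewrite !mu_rec_nil.
- case: k' Hk' => [|k'] Hk'.
  + have Hb0 : b = [::] by move: Hk'; rewrite leqn0 => /eqP /size0nil.
    by subst b; rewrite !mu_rec_nil.
  + rewrite !mu_rec_eq; case: eqP => // _; case: (contained a b); last by [].
    have Hif : forall (X Y : int), X = Y ->
      (if ~~ true then 0%R else (- X)%R) = (if ~~ true then 0%R else (- Y)%R) by move=> ? ? ->.
    apply: Hif.
    rewrite big_seq_cond [RHS]big_seq_cond; apply: eq_bigr => z.
    move=> /andP [Hz /andP [/andP [_ Hzb] Hne]].
    move: Hz; rewrite mem_Pl => /andP [Hzp _].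
    have := contained_lt Hzp Hb Hzb Hne => Hlt.
    by apply: IH => //; lia.
Qed.

Lemma mu_eq a b : is_perm b -> contained a b -> a != b ->
  mu a b = (- \sum_(z <- Pl (size b) | contained a z && contained z b && (z != b)) mu a z)%R.
Proof.
move=> Hb Hc Hne; rewrite /mu.
case Hs: (size b) => [|k].
  by move: Hne; have := contained_size Hc; rewrite Hs leqn0 => /eqP/size0nil ->; move/size0nil: Hs ->.
rewrite mu_rec_eq (negbTE Hne) Hc /= Hs.
congr (- _)%R; rewrite big_seq_cond [RHS]big_seq_cond; apply: eq_bigr => z.
move=> /andP [Hz /andP [/andP [_ Hzb] Hne']].
move: Hz; rewrite mem_Pl => /andP [Hzp _].
have := contained_lt Hzp Hb Hzb Hne' => Hlt.
apply: mu_fuel => //; lia.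
Qed.

Lemma mu_refl a : mu a a = 1%R.
Proof. by rewrite /mu; case: (size a) => [|k] /=; rewrite eqxx. Qed.

Lemma mu_not a b : ~~ contained a b -> mu a b = 0%R.
Proof.
move=> H; rewrite /mu; case: (size b) => [|k] /=;
by case: eqP => [E|_]; [move: H; rewrite E contained_refl | rewrite H].
Qed.


Lemma letters_uniq (pi : seq nat) (A : {set 'I_(size pi)}) : uniq pi ->
  uniq (letters_at A).
Proof.
move=> Hu; rewrite letters_idx map_inj_in_uniq.
- exact: subseq_uniq (idx_subseq A) (iota_uniq 0 _).
- move=> i j Hi Hj /eqP; rewrite nth_uniq //.
  + by move/eqP.
  + by move: (subseq_iota_all (idx_subseq A)) => /allP /(_ i Hi).
  + by move: (subseq_iota_all (idx_subseq A)) => /allP /(_ j Hj).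
Qed.

Lemma occ_std_iff (pi z : seq nat) (A : {set 'I_(size pi)}) : uniq pi -> is_perm z ->
  is_occurrence z A = (z == std (letters_at A)).
Proof.
move=> Hu Hz; apply/sameP/eqP => [H | ->]; last exact: so_std.
apply: perm_so_eq => //; first exact: perm_std (letters_uniq A Hu).
exact: so_trans (so_sym H) (so_std _).
Qed.

Lemma contained_std (pi y : seq nat) (A : {set 'I_(size pi)}) :
  contained y (std (letters_at A)) <->
  exists J, occJ y pi J /\ subseq J (idx A).
Proof.
rewrite letters_idx; split.
- move=> /containedP [J1 [H1 H2]].
  rewrite size_std size_map in H1.
  exists (map (nth 0 (idx A)) J1); split; last exact: map_nth_subseq.
  split; first exact: subseq_trans (map_nth_subseq H1) (idx_subseq A).
  apply: so_trans H2; apply: so_trans (so_map (so_std _) _); last first.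
    by rewrite size_map; exact: subseq_iota_all H1.
  have -> : map (nth 0 pi) (map (nth 0 (idx A)) J1) =
            map (nth 0 (map (nth 0 pi) (idx A))) J1.
    rewrite -map_comp; apply/eq_in_map => i Hi /=; rewrite (nth_map 0) //.
    by move: (subseq_iota_all H1) => /allP /(_ i Hi).
  exact: so_refl.
- move=> [J [[HJ1 HJ2] HJ3]]; apply/containedP.
  move: HJ3 => /subseqP [m Hm EJ].
  exists (mask m (iota 0 (size (idx A)))); split.
    by rewrite size_std size_map; apply: mask_subseq.
  apply: so_trans HJ2.
  have E2 : map (nth 0 (map (nth 0 pi) (idx A))) (mask m (iota 0 (size (idx A)))) = map (nth 0 pi) J.
    rewrite map_mask.
    have -> : map (nth 0 (map (nth 0 pi) (idx A))) (iota 0 (size (idx A))) = map (nth 0 pi) (idx A).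
      by rewrite -[in RHS](mkseq_nth 0 (map (nth 0 pi) (idx A))) size_map.
    by rewrite -map_mask -EJ.
  rewrite -E2; apply: so_map; first exact: so_sym (so_std _).
  rewrite size_std size_map; apply/allP => i /mem_mask; rewrite mem_iota; lia.
Qed.

Lemma W_inj x pi : is_perm x -> is_perm pi -> W x = W pi -> x = pi.
Proof.
move=> Hx Hpi E.
have Hs : subseq (W x) (map (g pi) (filter predT (iota 1 (size pi)))).
  by rewrite filter_predT E.
have [J [HJ _]] := bwd Hpi Hx Hs.
apply: contained_eq => //; first by apply/containedP; exists J.
by rewrite -(size_W x) E size_W.
Qed.

Lemma mask_vm pi (A : {set 'I_(size pi)}) :
  mask (vm A) (W pi) = map (g pi) (filter (fun v => index v pi \in idx A) (iota 1 (size pi))).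
Proof. by rewrite filter_mask map_mask. Qed.

Lemma CA_iff (pi y : seq nat) (A : {set 'I_(size pi)}) : is_perm pi -> is_perm y ->
  des y = des pi ->
  contained y (std (letters_at A)) = subseq (W y) (mask (vm A) (W pi)).
Proof.
move=> Hpi Hy Hd; rewrite mask_vm; apply/idP/idP.
- move/contained_std => [J [HJ Hsub]]; apply: (fwd Hpi Hy Hd HJ) => i Hi.
  rewrite index_uniq ?(perm_uniq_ Hpi) //; first exact: (mem_subseq Hsub).
  by move: (subseq_iota_all (proj1 HJ)) => /allP /(_ i Hi).
- move=> /(bwd Hpi Hy) [J [HJ Hp]]; apply/contained_std; exists J; split => //.
  have E1 := subseq_uniqP (iota_uniq 0 _) (proj1 HJ).
  have E2 := subseq_uniqP (iota_uniq 0 _) (idx_subseq A).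
  rewrite {1}E1 {1}E2; apply: subseq_filter_imp => i /= Hi.
  have := Hp i Hi; rewrite index_uniq ?(perm_uniq_ Hpi) //.
  by move: (subseq_iota_all (proj1 HJ)) => /allP /(_ i Hi).
Qed.

Lemma sum_pick (r : seq (seq nat)) (P : pred (seq nat)) (F : seq nat -> int) s :
  uniq r -> s \in r ->
  (\sum_(z <- r | P z) (if z == s then F z else 0) = if P s then F s else 0)%R.
Proof.
move=> Hu Hs; rewrite big_mkcond (bigD1_seq s) //= big1 ?addr0.
  by rewrite eqxx.
by move=> z Hz; rewrite (negbTE Hz); case: (P z).
Qed.

Definition Np (pi : seq nat) (A : {set 'I_(size pi)}) := normalw (W pi) (vm A).
Definition NEi (pi z : seq nat) : int :=
  (\sum_(A : {set 'I_(size pi)}) ind (is_occurrence z A && Np A))%R.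
Definition fr (pi z : seq nat) : int := ((-1) ^+ (size pi - size z) * NEi pi z)%R.

Lemma sumA_term (pi y : seq nat) (A : {set 'I_(size pi)}) : is_perm pi ->
  (\sum_(z <- Pl (size pi) | contained y z && contained z pi)
     (-1) ^+ (size pi - size z) * ind (is_occurrence z A && Np A) =
   (-1) ^+ (size pi - size (idx A)) * ind (Np A) * ind (contained y (std (letters_at A))))%R.
Proof.
move=> Hpi; set s := std (letters_at A).
have Hsp : is_perm s by apply: perm_std; apply: letters_uniq; exact: perm_uniq_.
have Hss : size s = size (idx A) by rewrite size_std letters_idx size_map.
have Hsin : s \in Pl (size pi).
  rewrite mem_Pl Hsp Hss /=.
  by have := size_subseq (idx_subseq A); rewrite size_iota.
have Hspi : contained s pi.
  apply/containedP; exists (idx A); split; first exact: idx_subseq.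
  rewrite -letters_idx; exact: so_std.
rewrite big_seq_cond.
rewrite (eq_bigr (fun z => if z == s then (-1) ^+ (size pi - size z) * ind (Np A) else 0)%R); last first.
  move=> z /andP [Hz _]; move: Hz; rewrite mem_Pl => /andP [Hzp _].
  rewrite occ_std_iff ?(perm_uniq_ Hpi) //.
  by case: (z == s); rewrite /= ?mulr0.
rewrite -big_seq_cond sum_pick //; last exact: Pl_uniq.
rewrite Hspi andbT Hss.
by case: (contained y s); rewrite /= ?mulr1 ?mulr0.
Qed.

Lemma right_id pi y : is_perm pi -> is_perm y -> des y = des pi ->
  (\sum_(z <- Pl (size pi) | contained y z && contained z pi) fr pi z = ind (y == pi))%R.
Proof.
move=> Hpi Hy Hd.
rewrite /fr /NEi.
under eq_bigr do rewrite mulr_sumr.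
rewrite exchange_big /=.
under eq_bigr do rewrite sumA_term //.
under eq_bigr do rewrite CA_iff //.
pose F := (fun m => sg m * ind (normalw (W pi) m) * ind (subseq (W y) (mask m (W pi))))%R.
rewrite (eq_bigr (fun A => F (vm A))); last first.
  by move=> A _; rewrite /F /sg count_vm.
rewrite (@reindex pi F) //.
have := Ss_main (W pi) (W y); rewrite /Ss size_W big_mkcond /= => E.
have -> : (y == pi) = (W y == W pi).
  apply/eqP/eqP => [-> // | H]; exact: W_inj.
rewrite -E; apply: eq_bigr => m _.
by rewrite /F; case: (normalw (W pi) m); rewrite /ind ?mulr1 ?mulr0 ?mul0r.
Qed.

Lemma left_id n a z : is_perm a -> is_perm z -> contained a z -> size z <= n ->
  (\sum_(y <- Pl n | contained a y && contained y z) mu a y = ind (a == z))%R.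
Proof.
move=> Ha Hz Haz Hn.
have Hzin : z \in filter (fun y => contained a y && contained y z) (Pl n).
  by rewrite mem_filter Haz contained_refl mem_Pl Hz Hn.
rewrite -big_filter (bigD1_seq z) //; last by rewrite filter_uniq // Pl_uniq.
rewrite big_filter_cond.
case: eqP => [Eaz | Hne].
- subst z; rewrite mu_refl big1_seq ?addr0 //.
  move=> y /andP [/andP [/andP [H1 H2] H3] Hy].
  move: Hy; rewrite mem_Pl => /andP [Hyp _].
  by move/negP: H3; case; apply/eqP; apply: contained_antisym.
- rewrite (@Pl_restrict _ _ _ (size z)) //; last first.
    by move=> y /andP [/andP [_ H] _]; apply: contained_size.
  rewrite (mu_eq Hz Haz); last by apply/eqP.
  exact: addNr.
Qed.


Lemma exch (r : seq (seq nat)) (P Q : seq nat -> seq nat -> bool) (G : seq nat -> seq nat -> int) :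
  (forall y z, P y z = Q y z) ->
  (\sum_(y <- r) \sum_(z <- r) (if P y z then G y z else 0) =
   \sum_(z <- r) \sum_(y <- r) (if Q y z then G y z else 0))%R.
Proof.
move=> H; rewrite exchange_big; apply: eq_bigr => z _; apply: eq_bigr => y _.
by rewrite H.
Qed.

Lemma main_formula sigma pi : is_perm sigma -> is_perm pi -> contained sigma pi ->
  des sigma = des pi -> mu sigma pi = fr pi sigma.
Proof.
move=> Hs Hpi Hc Hd.
set P := Pl (size pi).
have HsP : sigma \in P by rewrite mem_Pl Hs contained_size.
have HpP : pi \in P by rewrite mem_Pl Hpi leqnn.
have E1 : mu sigma pi = (\sum_(y <- P | contained sigma y && contained y pi)
                           (if y == pi then mu sigma y else 0))%R.
  by rewrite sum_pick ?Pl_uniq // Hc contained_refl.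
rewrite E1.
have E2 : (\sum_(y <- P | contained sigma y && contained y pi) (if y == pi then mu sigma y else 0) =
  \sum_(y <- P | contained sigma y && contained y pi)
     mu sigma y * \sum_(z <- P | contained y z && contained z pi) fr pi z)%R.
  rewrite big_seq_cond [RHS]big_seq_cond; apply: eq_bigr => y /andP [Hy /andP [H1 H2]].
  move: Hy; rewrite mem_Pl => /andP [Hyp _].
  rewrite right_id //; last first.
    by have h1 := des_mono H1; have h2 := des_mono H2; lia.
  by rewrite /ind; case: (y == pi); rewrite ?mulr1 ?mulr0.
rewrite E2.
under eq_bigr do rewrite mulr_sumr.
rewrite big_mkcond.
under eq_bigr do rewrite big_mkcond /=.
have E3 : (\sum_(y <- P) (if contained sigma y && contained y pi then
     \sum_(z <- P) (if contained y z && contained z pi then mu sigma y * fr pi z else 0) else 0) =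
   \sum_(y <- P) \sum_(z <- P) (if (contained sigma y && contained y pi) && (contained y z && contained z pi)
      then mu sigma y * fr pi z else 0))%R.
  apply: eq_bigr => y _; case: (contained sigma y && contained y pi) => /=.
    by [].
  by rewrite big1.
rewrite E3 (@exch _ _ (fun y z => (contained sigma z && contained z pi) && (contained sigma y && contained y z))); last first.
  move=> y z; apply/idP/idP.
  - move=> /andP [/andP [H1 H2] /andP [H3 H4]].
    by rewrite H4 H1 H3 (contained_trans H1 H3).
  - move=> /andP [/andP [H1 H2] /andP [H3 H4]].
    by rewrite H3 H4 H2 (contained_trans H4 H2).
have E4 : (\sum_(z <- P) \sum_(y <- P) (if (contained sigma z && contained z pi) && (contained sigma y && contained y z)
      then mu sigma y * fr pi z else 0) =
   \sum_(z <- P) (if z == sigma then fr pi z else 0))%R.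
  apply: eq_big_seq => z Hz /=.
  move: (Hz); rewrite mem_Pl => /andP [Hzp Hzs].
  case Hcz: (contained sigma z && contained z pi) => /=; last first.
    rewrite big1 //; case: eqP => // Ez; move: Hcz; rewrite Ez contained_refl Hc //.
  move/andP: Hcz => [Hsz Hzpi].
  rewrite -big_mkcond /= -mulr_suml /P left_id // /ind eq_sym.
  by case: (z == sigma); rewrite ?mul1r ?mul0r.
rewrite E4 (bigD1_seq sigma) ?Pl_uniq //.
case: ifP => [_ | /negP []]; last exact: eqxx.
rewrite big1; first exact: addr0.
by move=> z Hz; case: ifP => // H; rewrite H in Hz.
Qed.

Lemma NEi_card pi z : NEi pi z =
  Posz #|[set A : {set 'I_(size pi)} | is_occurrence z A && Np A]|.
Proof.
rewrite /NEi (eq_bigr (fun A => if A \in [set A : {set 'I_(size pi)} | is_occurrence z A && Np A] then 1%R else 0%R)); last first.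
  by move=> A _; rewrite inE.
rewrite -big_mkcond /= sumr_const natz.
by [].
Qed.

Theorem mainTheorem8 (sigma pi : seq nat) :
  is_perm sigma -> is_perm pi -> des sigma = des pi ->
  (`|mu sigma pi| <= occ sigma pi)%N.
Proof.
move=> Hs Hp Hd.
case Hc: (contained sigma pi).
- rewrite main_formula // /fr abszMsign NEi_card absz_nat /occ.
  apply: subset_leq_card; apply/subsetP => A; rewrite !inE => /andP [-> _] //.
- by rewrite mu_not ?Hc.
Qed.
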